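(* For every positive integer $k$ there is a deterministic algorithm that uses only the ordinal profile and makes no distance queries. On every finite metric space $(X,d)$ and every consistent profile, it returns a set of centers $C\subseteq X$ with $|C|\le 2^{k-1}$ such that $\max_{x\in X} d(x,C)\le 2\cdot\mathrm{OPT}^{\mathrm{center}}_k(X,d)$.
   Context: Ordinal query model: $(X,d)$ is a finite metric space with $|X|=n$. Every point $x\in X$ reports a ranking $\pi_x$ of all points of $X$ such that $y$ is ranked above $y'$ only if $d(x,y)\le d(x,y')$ (ties broken arbitrarily); the collection $P=\{\pi_x\}_{x\in X}$ is a profile consistent with $d$. An algorithm receives $X$, $k$ and $P$ for free. Its only other access to $d$ is by querying the exact value $d(x,y)$ for pairs of its choice; each such value costs one query. For $C\subseteq X$ write $d(x,C)=\min_{c\in C}d(x,c)$. The $k$-center cost of $C$ is $\max_{x\in X}d(x,C)$, and $\mathrm{OPT}^{\mathrm{center}}_k(X,d)=\min_{C\subseteq X,|C|=k}\max_{x\in X}d(x,C)$. *)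

(* Defs.v *)
From HB Require Import structures.
From mathcomp Require Import all_boot all_order all_algebra all_fingroup.
From mathcomp Require Import reals ereal.
Set Implicit Arguments. Unset Strict Implicit. Unset Printing Implicit Defensive.
Import Order.TTheory GRing.Theory Num.Theory.
Local Open Scope ring_scope.

(* The finite point set X is 'I_n (n = |X|). *)

Definition is_metric (R : realType) (n : nat) (d : 'I_n -> 'I_n -> R) : Prop :=
  [/\ forall x y, 0 <= d x y,
      forall x y, d x y = 0 <-> x = y,
      forall x y, d x y = d y x &
      forall x y z, d x z <= d x y + d y z].

(* An ordinal profile: for each point x, a ranking of all points of X,
   given as a bijection  position -> point  (position 0 = top). *)
Definition profile (n : nat) := 'I_n -> {perm 'I_n}.

Definition consistent (R : realType) (n : nat) (d : 'I_n -> 'I_n -> R)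
  (P : profile n) : Prop :=
  forall (x i j : 'I_n), (i < j)%N -> d x (P x i) <= d x (P x j).

Local Open Scope ereal_scope.

(* d(x, C) = min_{c in C} d(x,c)  (+oo if C is empty). *)
Definition dist_set (R : realType) (n : nat) (d : 'I_n -> 'I_n -> R)
  (x : 'I_n) (C : {set 'I_n}) : \bar R :=
  \big[Order.min/+oo]_(c in C) (d x c)%:E.

(* k-center cost of C: max_{x in X} d(x, C)  (taken to be 0 if X is empty). *)
Definition center_cost (R : realType) (n : nat) (d : 'I_n -> 'I_n -> R)
  (C : {set 'I_n}) : \bar R :=
  \big[Order.max/0]_(x : 'I_n) dist_set d x C.

(* OPT^center_k: min over center sets of at most k points
   (equal to the minimum over |C| = k whenever k <= |X|). *)
Definition opt_center (R : realType) (n : nat) (d : 'I_n -> 'I_n -> R)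
  (k : nat) : \bar R :=
  \big[Order.min/+oo]_(C : {set 'I_n} | (#|C| <= k)%N) center_cost d C.

(* Main.v *)
Require Import Defs.
From mathcomp Require Import all_boot all_order all_algebra all_fingroup.
From mathcomp Require Import reals ereal.
From mathcomp Require Import lra.
Import Order.TTheory GRing.Theory Num.Theory.
Local Open Scope ereal_scope.

Section Alg.
Variable n : nat.
Variable P : profile n.

Definition pos (c y : 'I_n) : nat := ((P c)^-1%g y : 'I_n).

Fixpoint alg (j : nat) (Y : {set 'I_n}) (c : 'I_n) : {set 'I_n} :=
  match j with
  | 0 => [set c]
  | j'.+1 =>
    match [pick f in Y | [forall z in Y, (pos c z <= pos c f)%N]] with
    | None => [set c]
    | Some f => alg j' [set y in Y | (pos y c <= pos y f)%N] c
                :|: alg j' [set y in Y | (pos y f < pos y c)%N] f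
    end
  end.

Lemma alg_card j Y c : (#|alg j Y c| <= 2 ^ j)%N.
Proof.
elim: j Y c => [|j IH] Y c /=; first by rewrite cards1.
case: pickP => [f _|_]; last by rewrite cards1 expn_gt0.
apply: leq_trans (leq_card_setU _ _) _.
by rewrite expnS mul2n -addnn leq_add.
Qed.

Lemma alg_mem j Y c : c \in alg j Y c.
Proof.
elim: j Y c => [|j IH] Y c /=; first by rewrite set11.
by case: pickP => [f _|_]; [rewrite inE IH | rewrite set11].
Qed.

Variable R : realType.
Variable d : 'I_n -> 'I_n -> R.
Hypothesis hd : is_metric d.
Hypothesis hP : consistent d P.
Variable r : R.

Local Open Scope ring_scope.

Lemma pos_le x y z : (pos x y <= pos x z)%N -> d x y <= d x z.
Proof.
rewrite leq_eqVlt => /orP [/eqP E|lt].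
  have : ((P x)^-1%g y) = ((P x)^-1%g z) by apply: val_inj.
  by move/perm_inj => ->.
have := hP x ((P x)^-1%g y) ((P x)^-1%g z) lt. by rewrite !permKV.
Qed.

Lemma dsym x y : d x y = d y x.
Proof. by case: hd. Qed.
Lemma dtri x y z : d x z <= d x y + d y z.
Proof. by case: hd. Qed.

Lemma alg_correct j : forall (Y : {set 'I_n}) c (B : {set 'I_n}), (#|B| <= j)%N ->
  (forall y, y \in Y -> d c y <= 2 * r \/ exists2 b, b \in B & d y b <= r) ->
  forall y, y \in Y -> exists2 a, a \in alg j Y c & d y a <= 2 * r.
Proof.
elim: j => [|j IH] Y c B hB hinv y hy /=.
  move: hB; rewrite leqn0 cards_eq0 => /eqP B0.
  case: (hinv y hy) => [h|[b]]; last by rewrite B0 inE.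
  by exists c; rewrite ?set11 // dsym.
case: pickP => [f /andP [fY /forallP fmax]|none]; last first.
  have [f Yf fm] := @arg_maxnP _ y (mem Y) (pos c) hy.
  have Yf' : f \in Y := Yf.
  have := none f; rewrite Yf' /= => /negbT/negP; case.
  by apply/forallP => z; apply/implyP => /fm.
have dmax z : z \in Y -> d c z <= d c f.
  by move=> hz; apply: (@pos_le c z f); exact: (implyP (fmax z) hz).
case: (lerP (d c f) (2 * r)) => hcf.
  exists c; first by rewrite inE alg_mem.
  by rewrite dsym; exact: le_trans (dmax y hy) hcf.
case: (hinv f fY) => [h|[bs bsB hbs]]; first by move: hcf; rewrite ltNge h.
set B' := B :\ bs.
have hB' : (#|B'| <= j)%N by move: hB; rewrite (cardsD1 bs B) bsB.
case: (leqP (pos y c) (pos y f)) => hpos.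
  have := IH [set z in Y | (pos z c <= pos z f)%N] c B' hB' _ y.
  case.
  - move=> z; rewrite inE => /andP [zY zp]; case: (hinv z zY) => [h|[b bB hb]]; first by left.
    case: (eqVneq b bs) => [eb|nb].
      left; subst b; rewrite dsym.
      have h1 := @pos_le z c f zp. have h2 := dtri z bs f. rewrite (dsym bs f) in h2. lra.
    by right; exists b; rewrite // !inE nb bB.
  - by rewrite inE hy hpos.
  by move=> a ha hay; exists a; rewrite // inE ha.
have := IH [set z in Y | (pos z f < pos z c)%N] f B' hB' _ y.
case.
- move=> z; rewrite inE => /andP [zY zp]; have h1 := @pos_le z f c (ltnW zp).
  case: (hinv z zY) => [h|[b bB hb]].
    left; rewrite dsym; rewrite dsym in h; lra.
  case: (eqVneq b bs) => [eb|nb].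
    left; subst b; have h2 := dtri f bs z. rewrite (dsym bs z) in h2. lra.
  by right; exists b; rewrite // !inE nb bB.
- by rewrite inE hy hpos.
by move=> a ha hay; exists a; rewrite // inE ha orbC.
Qed.
End Alg.

Arguments alg {n}.
Arguments alg_card {n}.
Arguments alg_correct {n}.

Lemma min_closed d (T : orderType d) (Q : T -> Prop) x y :
  Q x -> Q y -> Q (Order.min x y).
Proof.
by move=> hx hy; case: (leP x y).
Qed.

Lemma max_closed d (T : orderType d) (Q : T -> Prop) x y :
  Q x -> Q y -> Q (Order.max x y).
Proof.
by move=> hx hy; case: (leP x y).
Qed.

Lemma bigmin_le (R : realType) n (F : 'I_n -> \bar R) (C : {set 'I_n}) i :
  i \in C -> \big[Order.min/+oo]_(c in C) F c <= F i.
Proof. by move=> hi; rewrite (bigD1 i) //= ge_min lexx. Qed.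

Lemma bigmax_ge (R : realType) n (F : 'I_n -> \bar R) i :
  F i <= \big[Order.max/0]_(x : 'I_n) F x.
Proof. by rewrite (bigD1 i) //= le_max lexx. Qed.

Lemma cost_ge0 (R : realType) n (d : 'I_n -> 'I_n -> R) C : 0 <= center_cost d C.
Proof.
rewrite /center_cost; apply: (big_rec (fun v => 0 <= v)) => // i x _ hx.
by rewrite le_max hx orbT.
Qed.

Lemma dist_witness (R : realType) n (d : 'I_n -> 'I_n -> R) y C (r : R) :
  dist_set d y C <= r%:E -> exists2 o, o \in C & (d y o <= r)%R.
Proof.
case: (pickP [pred o in C | (d y o <= r)%R]) => [o /andP [oC ho] _|none].
  by exists o.
move=> h; exfalso; move: h; apply/negP; rewrite -ltNge /dist_set.
apply: (big_ind (fun v => r%:E < v)) => //.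
- by rewrite ltey.
- by move=> a b ha hb; rewrite lt_min ha hb.
- move=> o oC; rewrite lte_fin; have := none o; rewrite /= oC /= => /negbT.
  by rewrite -ltNge.
Qed.

Lemma key (n' : nat) (P : profile n'.+1) (R : realType) (d : 'I_n'.+1 -> 'I_n'.+1 -> R)
  (r : R) (k : nat) (C : {set 'I_n'.+1}) :
  is_metric d -> consistent d P -> (0 < k)%N -> (#|C| <= k)%N ->
  (forall y, exists2 o, o \in C & (d y o <= r)%R) ->
  forall x, exists2 a, a \in alg P (k - 1) setT ord0 & (d x a <= 2 * r)%R.
Proof.
move=> hd hP hk hC hcov x.
have [o0 o0C h0] := hcov ord0.
apply: (alg_correct P R d hd hP r (k - 1) setT ord0 (C :\ o0)) => //.
  by move: hC; rewrite (cardsD1 o0 C) o0C add1n => h; rewrite subn1 -ltnS (ltn_predK hk).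
move=> y _; have [o oC ho] := hcov y.
case: (eqVneq o o0) => [eo|no].
  left; subst o; have [_ _ hs ht] := hd; have := ht ord0 o0 y; rewrite (hs o0 y); lra.
by right; exists o; rewrite // !inE no oC.
Qed.

Theorem mainTheorem2 (k : nat) (hk : (0 < k)%N) :
  exists A : forall n : nat, profile n -> {set 'I_n},
    forall (R : realType) (n : nat) (d : 'I_n -> 'I_n -> R) (P : profile n),
      is_metric d -> consistent d P ->
      (#|A n P| <= 2 ^ (k - 1))%N /\
      center_cost d (A n P) <= 2%:E * opt_center d k.
Proof.
exists (fun n => match n return profile n -> {set 'I_n} with
                 | 0 => fun _ => set0
                 | n'.+1 => fun P => alg P (k - 1) setT ord0 end).
move=> R n d P hd hP; split.
  by case: n d P hd hP => [|n'] d P _ _ /=; [rewrite cards0 | exact: alg_card].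
set A := (match n return profile n -> {set 'I_n} with
                 | 0 => fun _ => set0
                 | n'.+1 => fun P => alg P (k - 1) setT ord0 end) P.
rewrite /opt_center.
apply: (big_ind (fun v => center_cost d A <= 2%:E * v)).
- by rewrite gt0_muley ?lte_fin // leey.
- by move=> a b; apply: (@min_closed _ _ (fun v => center_cost d A <= 2%:E * v)).
move=> C hC.
have v0 := cost_ge0 _ _ d C.
have dle y : dist_set d y C <= center_cost d C by apply: bigmax_ge.
case E : (center_cost d C) v0 dle => [r| |] v0 dle.
- have cov y : exists2 o, o \in C & (d y o <= r)%R.
    by apply: (dist_witness _ _ d); exact: dle.
  have H : forall x, exists2 a, a \in A & (d x a <= 2 * r)%R.
    rewrite /A; case: n d P hd hP C hC E cov {A dle} => [|n'] d P hd hP C hC E cov.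
      by case.
    exact: key hd hP hk hC cov.
  rewrite -EFinM /center_cost.
  apply: (big_ind (fun v => v <= (2 * r)%:E)).
  + by rewrite lee_fin; move: v0; rewrite lee_fin => v0; lra.
  + by move=> a b ha hb; rewrite ge_max ha hb.
  move=> x _; have [a aA ha] := H x.
  by apply: le_trans (bigmin_le _ _ _ _ _ aA) _; rewrite lee_fin.
- by rewrite gt0_muley ?lte_fin // leey.
- by [].
Qed.
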